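(* For every $f\in L^{\infty}(\mathbb{R}_+^{\times})$, $\overline{L}_1(f)\le\overline{M}(f)$.
   Context: $L^{\infty}(\mathbb{R}_+^{\times})$: real-valued essentially bounded measurable functions on $[1,\infty)$. $\overline{L}_1(f)=\lim_{\theta\to\infty}\limsup_{x\to\infty}\frac{1}{\log\theta}\int_x^{\theta x}f(t)\frac{dt}{t}$ and $\overline{M}(f)=\limsup_{x\to\infty}\frac1x\int_1^xf(t)\,dt$. *)

(* Defs.v *)
From HB Require Import structures.
From mathcomp Require Import all_boot all_order all_algebra.
From mathcomp Require Import all_classical all_reals all_analysis.
Set Implicit Arguments. Unset Strict Implicit. Unset Printing Implicit Defensive.
Import Order.TTheory GRing.Theory Num.Theory.
Import numFieldNormedType.Exports.
Local Open Scope classical_set_scope.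
Local Open Scope ring_scope.

Section Defs.
Variable R : realType.
Local Notation mu := (@lebesgue_measure R).

Definition Linfty_mult (f : R -> R) : Prop :=
  measurable_fun (`[1, +oo[%classic : set R) f /\
  exists M : R, {ae mu, forall t, `[1, +oo[%classic t -> `|f t| <= M}.

Definition log_int (f : R -> R) (theta x : R) : \bar R :=
  (\int[mu]_(t in (`[x%R, (theta * x)%R]%classic : set R)) (f t / t)%:E)%E.

Definition L1_inner (f : R -> R) (theta : R) : \bar R :=
  limf_esup (fun x : R => ((ln theta)^-1)%R%:E * log_int f theta x)%E (pinfty_nbhs R).

Definition L1bar (f : R -> R) : \bar R := lim (L1_inner f @ +oo%R).

Definition Mbar (f : R -> R) : \bar R :=
  limf_esup (fun x : R => (x^-1)%R%:E * \int[mu]_(t in (`[1%R, x]%classic : set R)) (f t)%:E)%E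
    (pinfty_nbhs R).
End Defs.

(* Main.v *)
Require Import Defs.
From HB Require Import structures.
From mathcomp Require Import all_boot all_order all_algebra.
From mathcomp Require Import all_classical all_reals all_analysis.
From mathcomp Require Import measurable_realfun.
From mathcomp Require Import ring lra.
Import Order.TTheory GRing.Theory Num.Theory.
Import numFieldNormedType.Exports.
Local Open Scope classical_set_scope.
Local Open Scope ring_scope.

Lemma near_ge (R : realType) (P : R -> Prop) (X : R) :
  (forall x, X <= x -> P x) -> pinfty_nbhs R P.
Proof.
move=> HP; exists X; split; first exact: num_real.
by move=> x /ltW; exact: HP.
Qed.

Lemma near_get (R : realType) (P : R -> Prop) :
  pinfty_nbhs R P -> exists X, 1 <= X /\ forall x, X <= x -> P x.
Proof.
case=> M [Mr HM]; exists (Num.max 1 (M + 1)); split; first by rewrite le_max lexx.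
move=> x; rewrite ge_max => /andP[_ Mx]; apply: HM.
by apply: lt_le_trans Mx; rewrite ltrDl.
Qed.

Lemma limf_esup_le (R : realType) (h : R -> \bar R) (r : \bar R) :
  pinfty_nbhs R (fun x => (h x <= r)%E) -> (limf_esup h (pinfty_nbhs R) <= r)%E.
Proof.
move=> hr; rewrite limf_esupE; apply: ge_ereal_inf.
exists (ereal_sup (h @` [set x | (h x <= r)%E])).
  by exists [set x | (h x <= r)%E].
by apply: ge_ereal_sup => _ [x hx <-].
Qed.

Lemma limf_esup_lt (R : realType) (h : R -> \bar R) (r : \bar R) :
  (limf_esup h (pinfty_nbhs R) < r)%E -> pinfty_nbhs R (fun x => (h x < r)%E).
Proof.
rewrite limf_esupE => /ereal_inf_lt [_ [V FV <-]] Vr.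
apply: filterS FV => x Vx; apply: le_lt_trans Vr.
by apply: ereal_sup_ubound; exists x.
Qed.

Section core.
Variable R : realType.
Local Notation mu := (@lebesgue_measure R).
Variable g : R -> R.
Variable C : R.
Hypothesis C0 : 0 <= C.
Hypothesis gC : forall t, `|g t| <= C.
Hypothesis mg : measurable_fun (`[1, +oo[%classic : set R) g.

Lemma minv_pos : measurable_fun (`]0, +oo[%classic : set R) (@GRing.inv R).
Proof.
apply: open_continuous_measurable_fun; first exact: interval_open.
move=> x; rewrite inE /= in_itv /= andbT => x0.
by apply: inv_continuous; rewrite gt_eqF.
Qed.

Lemma sub_cc_ge1 (a b : R) : 1 <= a -> `[a, b] `<=` (`[1, +oo[ : set R).
Proof.
move=> a1 t /=; rewrite !in_itv /= andbT => /andP[aT _].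
exact: le_trans aT.
Qed.

Lemma sub_cc_pos (a b : R) : 1 <= a -> `[a, b] `<=` (`]0, +oo[ : set R).
Proof.
move=> a1 t /=; rewrite !in_itv /= andbT => /andP[aT _].
by apply: (lt_le_trans ltr01); exact: le_trans aT.
Qed.

Lemma mu_cc_fin (a b : R) : (mu `[a, b] < +oo)%E.
Proof.
rewrite lebesgue_measure_itv /=; case: ifP => _; last exact: ltey.
by rewrite -EFinD ltey.
Qed.

Lemma bounded_on (A : set R) (h : R -> R) (B : R) :
  (forall t, A t -> `|h t| <= B) -> [bounded h x | x in A].
Proof.
move=> hB; exists B; split; first exact: num_real.
move=> M BM t At; apply: (le_trans (hB t At)); exact: ltW.
Qed.

Lemma intG (a b : R) : 1 <= a -> mu.-integrable `[a, b] (EFin \o g).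
Proof.
move=> a1; apply: measurable_bounded_integrable => //.
- exact: mu_cc_fin.
- by apply: (measurable_funS _ (sub_cc_ge1 a b a1) mg).
- by apply: (@bounded_on _ _ C) => t _.
Qed.

Lemma intH (a b : R) : 1 <= a ->
  mu.-integrable `[a, b] (EFin \o (fun t => g t / t)).
Proof.
move=> a1; apply: measurable_bounded_integrable => //.
- exact: mu_cc_fin.
- apply: measurable_funM.
    by apply: (measurable_funS _ (sub_cc_ge1 a b a1) mg).
  by apply: (measurable_funS _ (sub_cc_pos a b a1) minv_pos).
- apply: (@bounded_on _ _ C) => t /= ; rewrite in_itv /= => /andP[aT _].
  have t1 : 1 <= t by exact: le_trans aT.
  rewrite normrM normfV (ger0_norm (le_trans ler01 t1)).
  rewrite ler_pdivrMr ?(lt_le_trans ltr01 t1)//.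
  apply: (le_trans (gC t)); rewrite ler_peMr//.
Qed.

Lemma Rint_split (h : R -> R) (a b c : R) : a <= b -> b <= c ->
  mu.-integrable `[a, c] (EFin \o h) ->
  \int[mu]_(t in `[a, c]) h t =
  \int[mu]_(t in `[a, b]) h t + \int[mu]_(t in `[b, c]) h t.
Proof.
move=> ab bc ih.
have := @Rintegral_itvB R h (BLeft a) (BRight c) b ih.
rewrite !bnd_simp => /(_ ab bc) E.
rewrite -(@Rintegral_itv_obnd_cbnd _ b (BRight c)); last first.
  apply: integrableS ih => //; apply: subset_itvr; by rewrite bnd_simp.
by rewrite -E addrC subrK.
Qed.

Lemma mu_cc (a b : R) : a <= b -> mu `[a, b] = (b - a)%:E.
Proof.
move=> ab; rewrite lebesgue_measure_itv /= lte_fin.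
have [ab'|ba] := ltP a b; first by rewrite -EFinD.
have -> : a = b by apply/eqP; rewrite eq_le ab ba.
by rewrite subrr.
Qed.

Lemma Rint_cst (a b r : R) : a <= b -> \int[mu]_(t in `[a, b]) r = r * (b - a).
Proof.
move=> ab; rewrite Rintegral_cst//; congr (_ * _).
by have := mu_cc a b ab => /= ->.
Qed.

Definition G a b := \int[mu]_(t in `[a, b]) g t.
Definition H a b := \int[mu]_(t in `[a, b]) (g t / t).

Lemma G_split a b c : 1 <= a -> a <= b -> b <= c -> G a c = G a b + G b c.
Proof. by move=> a1 ab bc; apply: Rint_split => //; exact: intG. Qed.

Lemma H_split a b c : 1 <= a -> a <= b -> b <= c -> H a c = H a b + H b c.
Proof. by move=> a1 ab bc; apply: Rint_split => //; exact: intH. Qed.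

Lemma G_bound a b : 1 <= a -> a <= b -> `|G a b| <= C * (b - a).
Proof.
move=> a1 ab; apply: (le_trans (le_normr_Rintegral _ (intG a b a1))) => //.
rewrite -Rint_cst//; apply: le_Rintegral => //.
- exact: integrable_norm (intG a b a1).
- apply: measurable_bounded_integrable => //; first exact: mu_cc_fin.
  by apply: (@bounded_on _ _ `|C|) => t _.
Qed.

Lemma int_of (a b B : R) (h : R -> R) : measurable_fun `[a, b] h ->
  (forall t, (`[a, b]%classic : set R) t -> `|h t| <= B) -> mu.-integrable `[a, b] (EFin \o h).
Proof.
move=> mh hB; apply: measurable_bounded_integrable => //; first exact: mu_cc_fin.
exact: bounded_on hB.
Qed.

Lemma mG (a b : R) : 1 <= a -> measurable_fun `[a, b] g.
Proof. by move=> a1; apply: (measurable_funS _ (sub_cc_ge1 a b a1) mg). Qed.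

Lemma inv_le (a t : R) : 0 < a -> a <= t -> t^-1 <= a^-1.
Proof.
move=> a0 aT; have t0 : 0 < t by exact: lt_le_trans aT.
by rewrite lef_pV2 ?posrE.
Qed.

Lemma mH (a b : R) : 1 <= a -> measurable_fun `[a, b] (fun t => g t / t).
Proof.
move=> a1; apply: measurable_funM; first exact: mG.
by apply: (measurable_funS _ (sub_cc_pos a b a1) minv_pos).
Qed.

Lemma ndiv_le (s t : R) : 1 <= t -> `|g s / t| <= C.
Proof.
move=> t1; have t0 : 0 < t by exact: lt_le_trans ltr01 t1.
rewrite normrM normfV (gtr0_norm t0) ler_pdivrMr//.
by apply: (le_trans (gC s)); rewrite ler_peMr.
Qed.

Lemma H_bound a b : 1 <= a -> a <= b -> `|H a b| <= C * (b - a) / a.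
Proof.
move=> a1 ab; have a0 : 0 < a by exact: lt_le_trans ltr01 a1.
apply: (le_trans (le_normr_Rintegral _ (intH a b a1))) => //.
rewrite mulrAC -Rint_cst//; apply: le_Rintegral => //.
- exact: integrable_norm (intH a b a1).
- by apply: (@int_of _ _ `|C / a|) => // t _.
- move=> t /=; rewrite in_itv /= => /andP[aT _].
  have t0 : 0 < t by exact: lt_le_trans aT.
  rewrite normrM normfV (gtr0_norm t0) ler_pM//.
  by rewrite invr_ge0 ltW.
exact: inv_le.
Qed.

Lemma piece a b : 1 <= a -> a <= b ->
  H a b <= G a b / b + C * (a^-1 - b^-1) * (b - a).
Proof.
move=> a1 ab; have a0 : 0 < a by exact: lt_le_trans ltr01 a1.
have b0 : 0 < b by exact: lt_le_trans ab.
rewrite -lerBlDl /G -RintegralZr//; last exact: intG.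
rewrite /H -RintegralB//; last 2 first.
- exact: intH.
- apply: (@int_of _ _ (C / b)); first by apply: measurable_funM => //; exact: mG.
  move=> t _; rewrite normrM (@gtr0_norm _ b^-1) ?invr_gt0//.
  by rewrite ler_pM ?gC ?invr_ge0 ?(ltW b0).
rewrite -Rint_cst//; apply: le_Rintegral => //.
- apply: (@int_of _ _ (C + C)).
    apply: measurable_funB; first exact: mH.
    by apply: measurable_funM => //; exact: mG.
  move=> t /=; rewrite in_itv /= => /andP[aT Tb].
  apply: (le_trans (ler_normB _ _)); apply: lerD; apply: ndiv_le.
    exact: le_trans aT.
  exact: le_trans ab.
- by apply: (@int_of _ _ `|C * (a^-1 - b^-1)|) => // t _.
- move=> t /=; rewrite in_itv /= => /andP[aT Tb].
  have t0 : 0 < t by exact: lt_le_trans aT.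
  rewrite -mulrBr; apply: (le_trans (ler_norm _)); rewrite normrM.
  have h : 0 <= t^-1 - b^-1 by rewrite subr_ge0 inv_le.
  rewrite (ger0_norm h) ler_pM// lerB// inv_le//.
Qed.

Definition F x := G 1 x.
Definition J th x := H x (th * x).

Lemma le_mul1 (t x : R) : 1 <= t -> 0 <= x -> x <= t * x.
Proof. by move=> t1 x0; rewrite ler_peMl. Qed.

Lemma J_split th1 th2 x : 1 <= th1 -> 1 <= th2 -> 1 <= x ->
  J (th1 * th2) x = J th1 x + J th2 (th1 * x).
Proof.
move=> t1 t2 x1; have x0 : 0 <= x by exact: le_trans ler01 x1.
have h1 : x <= th1 * x by exact: le_mul1.
have h2 : th1 * x <= th2 * (th1 * x).
  by apply: le_mul1 => //; exact: le_trans h1.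
rewrite /J (H_split x (th1 * x) (th1 * th2 * x)) //; last first.
  by rewrite (mulrC th1 th2) -mulrA.
by rewrite (mulrC th1 th2) -mulrA.
Qed.

Lemma J_base th x : 1 <= th -> 1 <= x -> J th x <= C * (th - 1).
Proof.
move=> t1 x1; have x0 : 0 < x by exact: lt_le_trans ltr01 x1.
apply: (le_trans (ler_norm _)); apply: (le_trans (H_bound _ _ x1 _)).
  exact: le_mul1 (ltW x0).
have -> : C * (th * x - x) / x = C * (th - 1).
  by field; rewrite gt_eqF.
done.
Qed.

Lemma F_bound x : 1 <= x -> - C <= F x / x.
Proof.
move=> x1; have x0 : 0 < x by exact: lt_le_trans ltr01 x1.
rewrite ler_pdivlMr //.
have h := lerNnormlW (G_bound 1 x (lexx 1) x1).
apply: le_trans h; rewrite mulNr lerN2; apply: ler_pM => //.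
  by rewrite subr_ge0.
by rewrite lerBlDr lerDl.
Qed.

Lemma J_piece q y : 1 <= q -> 1 <= y ->
  J q y <= (F (q * y) - F y) / (q * y) + C * (q - 1) ^+ 2.
Proof.
move=> q1 y1; have y0 : 0 < y by exact: lt_le_trans ltr01 y1.
have q0 : 0 < q by exact: lt_le_trans ltr01 q1.
have yqy : y <= q * y by exact: le_mul1 (ltW y0).
apply: (le_trans (piece y (q * y) y1 yqy)).
have -> : G y (q * y) = F (q * y) - F y.
  by rewrite /F (G_split 1 y (q * y) (lexx 1) y1 yqy) addrAC subrr add0r.
rewrite lerD2l -mulrA ler_pM //.
  by rewrite mulr_ge0 // ?subr_ge0 // inv_le.
have -> : (y^-1 - (q * y)^-1) * (q * y - y) = (q - 1) ^+ 2 / q.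
  by field; rewrite !gt_eqF.
by rewrite ler_pdivrMr // ler_peMr // sqr_ge0.
Qed.

Lemma abel q c X : 1 <= q -> 1 <= X -> (forall y, X <= y -> F y / y <= c) ->
  forall N x, X <= x -> J (q ^+ N) x <= F (q ^+ N * x) / (q ^+ N * x) - F x / x
     + N%:R * ((1 - q^-1) * c + C * (q - 1) ^+ 2).
Proof.
move=> q1 X1 hc; elim=> [|N IH] x Xx; have x1 : 1 <= x by exact: le_trans Xx.
  rewrite expr0 mul1r subrr add0r mul0r.
  by have := J_base 1 x (lexx 1) x1; rewrite subrr mulr0.
have q0 : 0 < q by exact: lt_le_trans ltr01 q1.
have qN1 : 1 <= q ^+ N by exact: exprn_ege1.
set y := q ^+ N * x.
have xy : x <= y by exact: le_mul1 (le_trans ler01 x1).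
have y1 : 1 <= y by exact: le_trans xy.
have y0 : 0 < y by exact: lt_le_trans ltr01 y1.
rewrite exprSr (J_split (q ^+ N) q x qN1 q1 x1).
have h1 := IH x Xx.
have h2 := J_piece q y q1 y1.
have hy := hc y (le_trans Xx xy).
have -> : q ^+ N * q * x = q * y by rewrite /y mulrAC mulrC mulrA.
have key : F y / y - F y / (q * y) <= (1 - q^-1) * c.
  have -> : F y / y - F y / (q * y) = (1 - q^-1) * (F y / y).
    by field; rewrite !gt_eqF.
  by apply: ler_wpM2l => //; rewrite subr_ge0 invf_le1.
rewrite mulrBl in h2.
rewrite -/y in h1.
rewrite -natr1 mulrDl mul1r.
lra.
Qed.

Lemma fekete th0 r0 X : 1 < th0 -> 1 <= X ->
  (forall x, X <= x -> J th0 x <= r0 * ln th0) ->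
  forall k th x, 1 <= th -> th < th0 ^+ k -> X <= x ->
  J th x <= r0 * ln th + (`|r0| * ln th0 + C * (th0 - 1)).
Proof.
move=> t01 X1 h0; have t00 : 0 < th0 by exact: lt_trans t01.
elim=> [|k IH] th x t1 tk Xx; have x1 : 1 <= x by exact: le_trans Xx.
  by move: (le_lt_trans t1 tk); rewrite expr0 ltxx.
have t0 : 0 < th by exact: lt_le_trans ltr01 t1.
have [tt0|t0t] := ltP th th0.
  have hJ := J_base th x t1 x1.
  have hC : C * (th - 1) <= C * (th0 - 1).
    by apply: ler_wpM2l => //; rewrite lerB // ltW.
  have hl : ln th <= ln th0 by rewrite ler_ln ?posrE // ltW.
  have hl0 : 0 <= ln th by exact: ln_ge0.
  have hn : `|r0 * ln th| <= `|r0| * ln th0.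
    by rewrite normrM (ger0_norm hl0) ler_wpM2l.
  have := lerNnormlW hn; lra.
set th' := th / th0.
have t'1 : 1 <= th' by rewrite /th' ler_pdivlMr // mul1r.
have t'k : th' < th0 ^+ k by rewrite /th' ltr_pdivrMr // -exprSr.
have e : th = th0 * th' by rewrite /th' mulrC mulfVK // gt_eqF.
clearbody th'.
have xx : X <= th0 * x.
  apply: (le_trans Xx); apply: le_mul1 (ltW t01) (le_trans ler01 x1).
have := IH th' (th0 * x) t'1 t'k xx.
have := h0 x Xx.
rewrite e (J_split th0 th' x (ltW t01) t'1 x1) lnM ?posrE //; last first.
  exact: lt_le_trans ltr01 t'1.
lra.
Qed.

Lemma bernoulli_ge (h : R) (n : nat) : 0 <= h -> 1 + n%:R * h <= (1 + h) ^+ n.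
Proof.
move=> h0; elim: n => [|n IH]; first by rewrite mul0r addr0 expr0.
rewrite exprSr; apply: (le_trans _ (ler_wpM2r _ IH)); last first.
  lra.
have : 0 <= n%:R * h * h by rewrite mulr_ge0 // mulr_ge0.
rewrite -nat1r; lra.
Qed.

Lemma exists_pow (th0 th : R) : 1 < th0 -> exists k, th < th0 ^+ k.
Proof.
move=> t01; set h := th0 - 1; have h0 : 0 < h by rewrite subr_gt0.
exists (Num.truncn (`|th| / h)).+1.
have := bernoulli_ge h (Num.truncn (`|th| / h)).+1 (ltW h0).
have -> : 1 + h = th0 by rewrite /h addrC subrK.
apply: lt_le_trans.
have := truncnS_gt (`|th| / h); rewrite ltr_pdivrMr // => H1.
have := ler_norm th; lra.
Qed.

Lemma partB_real (c d : R) : 0 < d -> exists q, 1 < q /\ exists N : nat, (0 < N)%N /\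
  c + C + N%:R * ((1 - q^-1) * c + C * (q - 1) ^+ 2) <= N%:R * ln q * (c + d).
Proof.
move=> d0; have C0' : 0 <= C by exact: C0.
have nc : 0 <= `|c| by exact: normr_ge0.
set K := `|c| + C + 1.
have K0 : 0 < K by rewrite /K; lra.
set h := Num.min 1 (d / (4 * K)).
have h0 : 0 < h by rewrite /h lt_min ltr01 /= divr_gt0 // mulr_gt0.
have h1 : h <= 1 by rewrite /h ge_min lexx.
have hK : h * (4 * K) <= d.
  by rewrite -ler_pdivlMr ?mulr_gt0 // /h ge_min lexx orbT.
set q := 1 + h.
have q1 : 1 < q by rewrite /q ltrDl.
have q0 : 0 < q by exact: lt_trans q1.
set l := ln q.
have lh : l <= h by apply: le_ln1Dx; lra.
set p := 1 - q^-1.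
have pE : p = h / q by rewrite /p /q; field; rewrite gt_eqF.
have pq : p * q = h by rewrite pE mulfVK // gt_eqF.
have pl : p <= l.
  have := @le_ln1Dx _ (q^-1 - 1).
  have -> : 1 + (q^-1 - 1) = q^-1 by rewrite addrC subrK.
  rewrite lnV ?posrE // -/l.
  have qi : 0 < q^-1 by rewrite invr_gt0.
  have : -1 < q^-1 - 1 by lra.
  rewrite /p; lra.
have p0 : 0 <= p by rewrite pE divr_ge0 // ltW.
have hp : h <= 2 * p.
  by rewrite -pq; have := ler_wpM2l p0 (_ : q <= 2); rewrite /q; nra.
have lp : l - p <= h ^+ 2.
  have : h - p <= h ^+ 2.
    have ph : p <= h by rewrite -pq ler_peMr // ltW.
    have -> : h - p = p * h by rewrite -{1}pq /q; ring.
    by rewrite expr2 ler_wpM2r // ltW.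
  lra.
have cpl : c * (p - l) <= `|c| * (l - p).
  have := ler_norm (c * (p - l)); rewrite normrM distrC (ger0_norm (_ : 0 <= l - p)) //.
  by rewrite subr_ge0.
have Dle : p * c + C * h ^+ 2 <= (c + d / 2) * l.
  have e1 : (`|c| + C) * h ^+ 2 <= d / 4 * h.
    have : (`|c| + C) * h <= d / 4.
      rewrite ler_pdivlMr //; move: hK; rewrite /K; nra.
    by move=> H1; rewrite expr2 mulrA ler_pM2r.
  have e2 : `|c| * (l - p) <= `|c| * h ^+ 2 by apply: ler_wpM2l.
  have e3 : d / 4 * h <= d / 2 * l.
    have d4 : 0 <= d / 4 by rewrite divr_ge0 // ltW.
    have d2 : 0 <= d / 2 by rewrite divr_ge0 // ltW.
    have H1 : d / 4 * h <= d / 4 * (2 * p) by apply: ler_wpM2l.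
    have H2 : d / 2 * p <= d / 2 * l by apply: ler_wpM2l.
    have H3 : d / 4 * (2 * p) = d / 2 * p by field.
    lra.
  have : c * p + C * h ^+ 2 <= c * l + `|c| * (l - p) + C * h ^+ 2.
    by move: cpl; lra.
  lra.
have l0 : 0 < l by exact: ln_gt0.
apply: (ex_intro _ q); split => //.
set N := (Num.truncn (`|c + C| / (d / 2 * l))).+1.
apply: (ex_intro _ N); split => //.
have hN : `|c + C| < N%:R * (d / 2 * l).
  by rewrite -ltr_pdivrMr ?mulr_gt0 ?divr_gt0 // truncnS_gt.
have N0 : 0 <= (N%:R : R) by [].
have := ler_wpM2l N0 Dle.
have := ler_norm (c + C).
have -> : q - 1 = h by rewrite /q addrC addKr.
rewrite -/p -/l.
lra.
Qed.


Lemma le_lim_gt (L m : \bar R) : (forall c : R, (m < c%:E)%E -> (L <= c%:E)%E) -> (L <= m)%E.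
Proof.
move=> H; case: m H => [m| |] H.
- apply/lee_addgt0Pr => e e0; apply: H; by rewrite lte_fin ltrDl.
- exact: leey.
- case: L H => [l| |] H //.
  + have := H (l - 1) (ltNyr _); rewrite lee_fin => h; exfalso; lra.
  + by have := H 0 (ltNyr _).
Qed.

Lemma mid_real (e : \bar R) (r : R) : (e < r%:E)%E -> exists r0 : R, (e < r0%:E)%E /\ r0 < r.
Proof.
case: e => [x| |] //.
- rewrite lte_fin => xr; exists ((x + r) / 2); rewrite lte_fin; split; lra.
- by move=> _; exists (r - 1); split; [exact: ltNyr | lra].
Qed.

Variable f : R -> R.
Hypothesis linkH : forall a b, 1 <= a ->
  (\int[mu]_(t in (`[a%R, b%R]%classic : set R)) (f t / t)%:E)%E = (H a b)%:E.
Hypothesis linkG : forall b, 1 <= b ->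
  (\int[mu]_(t in (`[1%R, b%R]%classic : set R)) (f t)%:E)%E = (G 1 b)%:E.

Lemma a_upper th B X : 1 < th -> 1 <= X -> (forall x, X <= x -> J th x <= B) ->
  (L1_inner f th <= (B / ln th)%:E)%E.
Proof.
move=> t1 X1 hB; apply: limf_esup_le; apply: (@near_ge _ _ X) => x Xx.
have x1 : 1 <= x by exact: le_trans Xx.
rewrite /log_int linkH // -EFinM lee_fin mulrC ler_pM2r ?invr_gt0 ?ln_gt0 //.
exact: hB.
Qed.

Lemma a_lt th r : 1 < th -> (L1_inner f th < r%:E)%E ->
  exists X, 1 <= X /\ forall x, X <= x -> J th x < r * ln th.
Proof.
move=> t1 /limf_esup_lt /near_get [X [X1 HX]]; exists X; split => // x Xx.
have x1 : 1 <= x by exact: le_trans Xx.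
have := HX x Xx; rewrite /log_int linkH // -EFinM lte_fin mulrC.
by rewrite ltr_pdivrMr ?ln_gt0.
Qed.

Definition aL := ereal_inf [set L1_inner f th | th in (`]1%R, +oo[%classic : set R)].

Lemma aL_le th : 1 < th -> (aL <= L1_inner f th)%E.
Proof.
move=> t1; apply: ge_ereal_inf; exists (L1_inner f th) => //.
by exists th => //=; rewrite in_itv /= andbT.
Qed.

Lemma partA r : (aL < r%:E)%E ->
  exists T, 1 < T /\ forall th, T <= th -> (L1_inner f th <= r%:E)%E.
Proof.
move=> /ereal_inf_lt [_ [th0 th0in <-] ltr].
have t01 : 1 < th0 by move: th0in => /=; rewrite in_itv /= andbT.
have [r0 [a0 r0r]] := mid_real _ _ ltr.
have [X [X1 HX]] := a_lt th0 r0 t01 a0.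
set B := `|r0| * ln th0 + C * (th0 - 1).
have Jb : forall th x, 1 <= th -> X <= x -> J th x <= r0 * ln th + B.
  move=> th x t1 Xx; have [k hk] := exists_pow th0 th t01.
  apply: (fekete th0 r0 X t01 X1 _ k th x t1 hk Xx).
  by move=> y Xy; exact/ltW/HX.
exists (Num.max 2 (expR (B / (r - r0)))); split.
  by rewrite lt_max; apply/orP; left; lra.
move=> th; rewrite ge_max => /andP[t2 tE].
have t1 : 1 < th by apply: lt_le_trans t2; lra.
apply: le_trans (a_upper th (r0 * ln th + B) X t1 X1 (fun x Xx => Jb th x (ltW t1) Xx)) _.
have l0 : 0 < ln th by exact: ln_gt0.
rewrite lee_fin ler_pdivrMr //.
have : B / (r - r0) <= ln th.
  rewrite -(expRK (B / (r - r0))) ler_ln ?posrE ?expR_gt0 //.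
  exact: lt_trans t1.
rewrite ler_pdivrMr ?subr_gt0 //.
have rr : 0 < r - r0 by rewrite subr_gt0.
move=> h; nra.
Qed.

Lemma aL_cvg : (L1_inner f x @[x --> +oo%R] --> aL)%classic.
Proof.
have two1 : (1 : R) < 2 by lra.
case E: aL => [l| |].
- apply/fine_cvgP; split.
    have [T [T1 HT]] : exists T, 1 < T /\ forall th, T <= th -> (L1_inner f th <= (l + 1)%:E)%E.
      by apply: partA; rewrite E lte_fin ltrDl.
    apply: (@near_ge _ _ T) => th Tth.
    have t1 : 1 < th by exact: lt_le_trans Tth.
    have lo := aL_le th t1; rewrite E in lo.
    have hi := HT th Tth.
    move: lo hi; case: (L1_inner f th) => //.
  apply/cvgrPdist_le => e e0.
  have [T [T1 HT]] : exists T, 1 < T /\ forall th, T <= th -> (L1_inner f th <= (l + e)%:E)%E.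
    by apply: partA; rewrite E lte_fin ltrDl.
  apply: (@near_ge _ _ T) => th Tth.
  have t1 : 1 < th by exact: lt_le_trans Tth.
  have lo := aL_le th t1; rewrite E in lo.
  have hi := HT th Tth.
  rewrite /=; move: lo hi; case: (L1_inner f th) => // v; rewrite !lee_fin /= => lo hi.
  rewrite distrC ger0_norm ?subr_ge0 //; lra.
- have up : (L1_inner f 2 <= (C / ln 2)%:E)%E.
    apply: (a_upper 2 C 1 two1 (lexx 1)) => x x1.
    by have := J_base 2 x (ltW two1) x1; lra.
  by have := le_trans (aL_le 2 two1) up; rewrite E leye_eq.
- apply/cvgeNyPle => A.
  have [T [T1 HT]] : exists T, 1 < T /\ forall th, T <= th -> (L1_inner f th <= A%:E)%E.
    by apply: partA; rewrite E ltNyr.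
  exact: (@near_ge _ _ T).
Qed.

Lemma partB : (aL <= Mbar f)%E.
Proof.
have C0' : 0 <= C by exact: C0.
apply: le_lim_gt => c Mc.
have [X [X1 HX]] := near_get _ _ (limf_esup_lt _ _ _ Mc).
have hc : forall y, X <= y -> F y / y <= c.
  move=> y Xy; have y1 : 1 <= y by exact: le_trans Xy.
  have := HX y Xy; rewrite linkG // -EFinM lte_fin mulrC => /ltW.
  done.
apply/lee_addgt0Pr => d d0.
have [q [q1 [N [N0 HN]]]] := partB_real c d d0.
have q0 : 0 < q by exact: lt_trans q1.
set th := q ^+ N.
have th1 : 1 < th by rewrite /th exprn_egt1 // -lt0n.
apply: le_trans (aL_le th th1) _.
apply: le_trans (a_upper th (c + C + N%:R * ((1 - q^-1) * c + C * (q - 1) ^+ 2)) X th1 X1 _) _.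
  move=> x Xx; have x1 : 1 <= x by exact: le_trans Xx.
  have := abel q c X (ltW q1) X1 hc N x Xx.
  have qN1 : 1 <= q ^+ N by exact: exprn_ege1 (ltW q1).
  have := hc (q ^+ N * x) (le_trans Xx (le_mul1 _ _ qN1 (le_trans ler01 x1))).
  have := F_bound x x1.
  rewrite -/th; lra.
have l0 : 0 < ln q by exact: ln_gt0.
have N0' : 0 < (N%:R : R) by rewrite ltr0n.
rewrite lee_fin /th lnXn // -[ln q *+ N]mulr_natr ler_pdivrMr ?mulr_gt0 //.
move: HN; lra.
Qed.

Lemma main_core : (L1bar f <= Mbar f)%E.
Proof. by rewrite /L1bar (cvg_lim _ aL_cvg) ?partB //; exact: ereal_hausdorff. Qed.

End core.

Lemma clamp_eq (R : realType) (C x : R) : `|x| <= C -> Num.max (- C) (Num.min C x) = x.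
Proof.
rewrite ler_norml => /andP[h1 h2].
by rewrite (min_r h2) (max_r h1).
Qed.

Theorem theorem4p6 (R : realType) (f : R -> R) :
  Linfty_mult f -> (L1bar f <= Mbar f)%E.
Proof.
case=> mf [M hM].
set C := `|M|.
have C0 : 0 <= C by exact: normr_ge0.
pose g := (fun _ : R => - C) \max ((fun _ : R => C) \min f).
have gE : forall t, g t = Num.max (- C) (Num.min C (f t)) by [].
have gC : forall t, `|g t| <= C.
  move=> t; rewrite gE ler_norml le_max lexx /= ge_max ge_min lexx orTb andbT.
  lra.
have mg : measurable_fun (`[1, +oo[%classic : set R) g.
  apply: measurable_maxr; first exact: measurable_cst.
  by apply: measurable_minr => //; exact: measurable_cst.
have aeq : forall a b : R, 1 <= a ->
    {ae lebesgue_measure, forall t, (`[a, b]%classic : set R) t -> f t = g t}.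
  move=> a b a1.
  apply: (@filterS _ _ (ae_filter_ringOfSetsType (@lebesgue_measure R)) _ _ _ hM) => t Ht Dt.
  rewrite gE clamp_eq //; apply: le_trans (Ht (sub_cc_ge1 R a b a1 t Dt)) _.
  exact: ler_norm.
apply: (main_core R g C C0 gC mg f).
- move=> a b a1.
  have mi : measurable_fun (`[a, b]%classic : set R) (@GRing.inv R).
    by apply: (measurable_funS _ (sub_cc_pos R a b a1) (minv_pos R)).
  have mfa : measurable_fun (`[a, b]%classic : set R) f.
    by apply: (measurable_funS _ (sub_cc_ge1 R a b a1) mf).
  have mga : measurable_fun (`[a, b]%classic : set R) g.
    by apply: (measurable_funS _ (sub_cc_ge1 R a b a1) mg).
  rewrite /H /Rintegral fineK; last first.
    by apply: integrable_fin_num => //; exact: (intH R g C C0 gC mg a b a1).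
  apply: ae_eq_integral => //.
  + by apply/measurable_EFinP; exact: measurable_funM.
  + by apply/measurable_EFinP; exact: measurable_funM.
  + by apply: (@filterS _ _ (ae_filter_ringOfSetsType (@lebesgue_measure R)) _ _ _ (aeq a b a1)) => t ht Dt; rewrite ht.
- move=> b b1.
  have mfa : measurable_fun (`[1%R, b]%classic : set R) f.
    by apply: (measurable_funS _ (sub_cc_ge1 R 1 b (lexx 1)) mf).
  have mga : measurable_fun (`[1%R, b]%classic : set R) g.
    by apply: (measurable_funS _ (sub_cc_ge1 R 1 b (lexx 1)) mg).
  rewrite /G /Rintegral fineK; last first.
    by apply: integrable_fin_num => //; exact: (intG R g C gC mg 1 b (lexx 1)).
  apply: ae_eq_integral => //.
  + exact/measurable_EFinP.
  + exact/measurable_EFinP.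
  + by apply: (@filterS _ _ (ae_filter_ringOfSetsType (@lebesgue_measure R)) _ _ _ (aeq 1 b (lexx 1))) => t ht Dt; rewrite ht.
Qed.
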